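(* Let $n\ge4$. The set $\{g_1,\dots,g_{n-3},h_1\}$ yields a duality on the algebra $\mathbf C_n$; that is, for the alter ego $(C_n;g_1,\dots,g_{n-3},h_1,\mathscr T)$, the evaluation map $e_{\mathbf C_n}\colon\mathbf C_n\to ED(\mathbf C_n)$ is an isomorphism.
   Context: $\mathbf C_n$ is the Heyting algebra whose universe is the chain $\{0<1<\dots<n-1\}$, with lattice operations min and max, $\bot=0$, $\top=n-1$, and $a\to b=\top$ if $a\le b$, $a\to b=b$ if $b<a$. $\mathcal G_n$ is the class of algebras isomorphic to subalgebras of direct powers of $\mathbf C_n$; $\mathcal G_n(\mathbf A,\mathbf C_n)$ is the set of Heyting homomorphisms $\mathbf A\to\mathbf C_n$. $h_1$ is the endomorphism of $\mathbf C_n$ with $h_1(k)=k+1$ for $1\le k<n-1$ and $h_1(k)=k$ for $k\in\{0,n-1\}$. For $1\le i\le n-3$, $g_i$ is the partial endomorphism with domain $C_n\setminus\{i\}$ given by $g_i(i+1)=i$ and $g_i(k)=k$ for $k\notin\{i,i+1\}$. Natural duality set-up: an alter ego here is $(C_n;P,\mathscr T)$ with $P$ a set of total and partial endomorphisms of $\mathbf C_n$ (homomorphisms from subalgebras of $\mathbf C_n$ into $\mathbf C_n$) and $\mathscr T$ discrete. Powers carry the product topology and pointwise-lifted operations: for $p\in P$, $p^S(x)=p\circ x$, defined iff $x(s)\in\operatorname{dom}p$ for all $s\in S$. A substructure is a subset closed under all these (partial) operations wherever defined. $\mathcal X$ is the class of topological structures isomorphic to closed substructures of powers (empty one included); morphisms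 are continuous maps $\varphi$ preserving total operations and, for partial $p$, such that $x\in\operatorname{dom}p^{\mathbf X}$ implies $\varphi(x)\in\operatorname{dom}p^{\mathbf Y}$ and $\varphi(p^{\mathbf X}(x))=p^{\mathbf Y}(\varphi(x))$. For $\mathbf A\in\mathcal G_n$, $D(\mathbf A)=\mathcal G_n(\mathbf A,\mathbf C_n)$ viewed as a closed substructure of the power with exponent $A$; for $\mathbf X\in\mathcal X$, $E(\mathbf X)$ is the set of $\mathcal X$-morphisms from $\mathbf X$ to the alter ego, a subalgebra of $\mathbf C_n^X$. The evaluation $e_{\mathbf A}\colon\mathbf A\to ED(\mathbf A)$, $e_{\mathbf A}(a)(x)=x(a)$, is always an embedding; $P$ yields a duality on $\mathbf A$ if $e_{\mathbf A}$ is surjective. *)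

(* Defs.v *)
From mathcomp Require Import all_boot all_order.
Set Implicit Arguments. Unset Strict Implicit. Unset Printing Implicit Defensive.
Import Order.TTheory.
Local Open Scope order_scope.

(* The chain C_n = {0 < 1 < ... < n-1}, carried by 'I_(n.-1).+1
   (which is the n-element ordinal type as soon as n >= 1). *)
Definition C (n : nat) : finType := 'I_n.-1.+1.

Definition Cbot (n : nat) : C n := ord0.
Definition Ctop (n : nat) : C n := ord_max.
Definition Cmeet (n : nat) (a b : C n) : C n := Order.min a b.
Definition Cjoin (n : nat) (a b : C n) : C n := Order.max a b.
Definition Cimp (n : nat) (a b : C n) : C n := if a <= b then Ctop n else b.

Definition is_hom (n : nat) (f : {ffun C n -> C n}) : Prop :=
  [/\ f (Cbot n) = Cbot n, f (Ctop n) = Ctop n,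
      forall a b, f (Cmeet a b) = Cmeet (f a) (f b),
      forall a b, f (Cjoin a b) = Cjoin (f a) (f b) &
      forall a b, f (Cimp a b) = Cimp (f a) (f b)].

Definition h1 (n : nat) (k : C n) : C n :=
  if (0 < val k)%N && (val k < n.-1)%N then inord (val k).+1 else k.

(* g_i, partial with domain C_n \ {i}: g_i(i+1) = i, identity elsewhere on
   the domain.  The value at i (outside the domain) is irrelevant; it is
   set to i. *)
Definition g (n i : nat) (k : C n) : C n :=
  if val k == i.+1 then inord i else k.

(* The points of D(C_n) are the homomorphisms x; the lifted operations are
   pointwise: h_1^D(x) = h_1 o x, and g_i^D(x) = g_i o x, defined iff
   x(a) <> i for all a.  A morphism phi : D(C_n) -> alter ego is given as a
   function on all of {ffun C n -> C n}; only its values on homs matter. *)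
Definition dual_morphism (n : nat) (phi : {ffun C n -> C n} -> C n) : Prop :=
  (forall x, is_hom x -> phi [ffun a => h1 (x a)] = h1 (phi x)) /\
  (forall i, (1 <= i)%N -> (i <= n - 3)%N ->
     forall x, is_hom x -> (forall a : C n, nat_of_ord (x a) != i :> nat) ->
       nat_of_ord (phi x) != i :> nat /\ phi [ffun a => @g n i (x a)] = @g n i (phi x)).

(* Main.v *)
Require Import Defs.
From mathcomp Require Import all_boot all_order.
From mathcomp Require Import zify.
Set Implicit Arguments. Unset Strict Implicit. Unset Printing Implicit Defensive.
Import Order.TTheory.

Lemma val_meet n (a b : C n) : nat_of_ord (Cmeet a b) = minn a b.
Proof.
rewrite /Cmeet /Order.min. have -> : (a < b)%O = (a < b)%N by [].
case: ltnP => h /=; lia.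
Qed.
Lemma val_join n (a b : C n) : nat_of_ord (Cjoin a b) = maxn a b.
Proof.
rewrite /Cjoin /Order.max. have -> : (a < b)%O = (a < b)%N by [].
case: ltnP => h /=; lia.
Qed.
Lemma Cimp_nat n (a b : C n) : Cimp a b = if (nat_of_ord a <= nat_of_ord b)%N then Ctop n else b.
Proof. by []. Qed.

Definition GH n (x : {ffun C n -> C n}) :=
  [/\ nat_of_ord (x ord0) = 0, nat_of_ord (x ord_max) = n.-1 &
   forall a b : C n, (nat_of_ord a < nat_of_ord b)%N -> (nat_of_ord (x a) < nat_of_ord (x b))%N \/ (nat_of_ord (x a) = n.-1 /\ nat_of_ord (x b) = n.-1)].

Lemma val_top n : nat_of_ord (Ctop n) = n.-1. Proof. by []. Qed.

Lemma hom_GH n x : is_hom x -> @GH n x.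
Proof.
case=> h0 hT hm hj hi; split.
- by rewrite /Cbot in h0; rewrite h0.
- by rewrite /Ctop in hT; rewrite hT.
move=> a b ab.
have ma : Cmeet a b = a by apply: ord_inj; rewrite val_meet; lia.
have ia : Cimp b a = a by rewrite Cimp_nat; case: leqP => // h; exfalso; lia.
have := hm a b; have := hi b a; rewrite ma ia => e1 /(congr1 (@nat_of_ord _)) e2.
move: e1 => /(congr1 (@nat_of_ord _)); rewrite Cimp_nat; move: e2; rewrite val_meet.
case: leqP => h; rewrite ?val_top => e2 e1.
- right. have := ltn_ord (x b). lia.
- left. lia.
Qed.

Lemma GH_hom n x : @GH n x -> is_hom x.
Proof.
case=> h0 hT hab.
have mono : forall a b : C n, (nat_of_ord a <= nat_of_ord b)%N -> (nat_of_ord (x a) <= nat_of_ord (x b))%N.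
  move=> a b; rewrite leq_eqVlt; case/orP => [/eqP e|/hab]; last lia.
  by have -> : a = b by apply: ord_inj.
split.
- by apply: ord_inj; rewrite h0.
- by apply: ord_inj; rewrite hT.
- move=> a b; apply: ord_inj; rewrite val_meet.
  case: (leqP a b) => h.
  + have := mono _ _ h. have -> : Cmeet a b = a by apply: ord_inj; rewrite val_meet; lia. lia.
  + have := mono b a (ltnW h). have -> : Cmeet a b = b by apply: ord_inj; rewrite val_meet; lia. lia.
- move=> a b; apply: ord_inj; rewrite val_join.
  case: (leqP a b) => h.
  + have := mono _ _ h. have -> : Cjoin a b = b by apply: ord_inj; rewrite val_join; lia. lia.
  + have := mono b a (ltnW h). have -> : Cjoin a b = a by apply: ord_inj; rewrite val_join; lia. lia.
- move=> a b; rewrite !Cimp_nat; case: leqP => h.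
  + rewrite (mono _ _ h); apply: ord_inj; exact hT.
  + case: (hab _ _ h) => e.
    * by case: leqP => // h2; exfalso; lia.
    * have -> : (nat_of_ord (x a) <= nat_of_ord (x b))%N by lia.
      by apply: ord_inj; rewrite val_top; lia.
Qed.

Definition F n (x : {ffun C n -> C n}) (c : nat) : nat := nat_of_ord (x (inord c)).
Definition mk n (G : nat -> nat) : {ffun C n -> C n} :=
  [ffun c : C n => (inord (G (nat_of_ord c)) : C n)].

Lemma mkE n (G : nat -> nat) (c : C n) : (G c <= n.-1)%N -> nat_of_ord (@mk n G c) = G c.
Proof. by move=> h; rewrite /mk ffunE inordK. Qed.

Lemma FmkE n (G : nat -> nat) c : (c <= n.-1)%N -> (G c <= n.-1)%N -> F (@mk n G) c = G c.
Proof. by move=> hc h; rewrite /F mkE inordK. Qed.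

Lemma F_le n x c : (@F n x c <= n.-1)%N.
Proof. rewrite /F. have := ltn_ord (x (inord c)). lia. Qed.

Lemma ffun_eqF n (x y : {ffun C n -> C n}) :
  (forall c, (c <= n.-1)%N -> F x c = F y c) -> x = y.
Proof.
move=> h; apply/ffunP => c; apply: ord_inj.
have hc : (nat_of_ord c <= n.-1)%N by have := ltn_ord c; lia.
by have := h _ hc; rewrite /F inord_val.
Qed.

Lemma F_val n (x : {ffun C n -> C n}) (c : C n) : nat_of_ord (x c) = F x c.
Proof. by rewrite /F inord_val. Qed.

Lemma hom_nat n x : is_hom x ->
  [/\ @F n x 0 = 0, F x n.-1 = n.-1 &
   forall a b, (a < b)%N -> (b <= n.-1)%N -> (F x a < F x b)%N \/ (F x a = n.-1 /\ F x b = n.-1)].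
Proof.
move/hom_GH => [h0 hT hab]; split.
- rewrite /F. have -> : (inord 0 : C n) = ord0 by apply: ord_inj; rewrite inordK.
  exact h0.
- rewrite /F. have -> : (inord n.-1 : C n) = ord_max by apply: ord_inj; rewrite inordK.
  exact hT.
- move=> a b ab bT; rewrite /F; apply: hab; rewrite !inordK; lia.
Qed.

Lemma mk_hom n (G : nat -> nat) : G 0 = 0 -> G n.-1 = n.-1 -> (forall c, (c <= n.-1)%N -> (G c <= n.-1)%N) ->
  (forall a b, (a < b)%N -> (b <= n.-1)%N -> (G a < G b)%N \/ (G a = n.-1 /\ G b = n.-1)) ->
  is_hom (@mk n G).
Proof.
move=> h0 hT hle hab; apply: GH_hom; split.
- by rewrite mkE /= h0.
- by rewrite mkE /= hT.
- move=> a b ab.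
  have hb : (nat_of_ord b <= n.-1)%N by have := ltn_ord b; lia.
  have ha : (nat_of_ord a <= n.-1)%N by lia.
  rewrite !mkE; try exact: hle. exact: hab.
Qed.

Lemma val_h1 n (k : C n) : nat_of_ord (h1 k) = if (0 < k)%N && (k < n.-1)%N then k.+1 else k.
Proof. rewrite /h1; case: ifP => // /andP[h1 h2]; rewrite inordK //. Qed.

Lemma val_g n i (k : C n) : nat_of_ord (g i k) = if nat_of_ord k == i.+1 then i else k.
Proof.
rewrite /g; case: eqP => // e; rewrite inordK //; apply: leq_trans (ltn_ord k); rewrite e; exact: leqnSn.
Qed.

Definition v n i := if i == n.-1 then 4 * n else n - i.
Definition mu n (x : {ffun C n -> C n}) := \sum_(c : C n) v n (F x c).

Lemma main n (hn : (4 <= n)%N) (phi : {ffun C n -> C n} -> C n) (hphi : dual_morphism phi) :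
  forall m x, is_hom x -> (mu x < m)%N -> phi x = x (phi [ffun c => c]).
Proof.
case: hphi => hh hg.
set a0 := phi [ffun c => c].
elim=> [//|m IH] x hx hmu.
have [f0 fT fs] := hom_nat hx.
have fle := F_le x.
have mono : forall a b, (a <= b)%N -> (b <= n.-1)%N -> (F x a <= F x b)%N.
  move=> a b; rewrite leq_eqVlt; case/orP => [/eqP -> //|ab bT]; case: (fs a b ab bT); lia.
have stepH : forall y, is_hom y -> (mu y < mu x)%N -> x = [ffun a => h1 (y a)] -> phi x = x a0.
  move=> y hy lt ->; rewrite hh // ffunE IH //; lia.
have stepG : forall i y, (1 <= i)%N -> (i <= n - 3)%N -> is_hom y ->
    (forall a : C n, nat_of_ord (y a) != i) -> (mu y < mu x)%N ->
    x = [ffun a => g i (y a)] -> phi x = x a0.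
  move=> i y i1 i2 hy av lt ->; have [_ ->] := hg i i1 i2 y hy av; rewrite ffunE IH //; lia.
case: (eqVneq (F x 1) 1) => [x1|x1].
- case: (boolP [forall c : C n, nat_of_ord (x c) == c]) => [/forallP allid | notid].
    have -> : x = [ffun c => c].
      by apply/ffunP => c; rewrite ffunE; apply: ord_inj; exact/eqP/allid.
    by rewrite ffunE.
  have ex : exists c, (c <= n.-1)%N && (F x c != c).
    move/forallPn: notid => [c hc]; exists c; rewrite -F_val hc andbT -ltnS; exact: ltn_ord.
  case: (ex_minnP ex) => j /andP[jT /eqP jne] jmin.
  have below : forall c, (c < j)%N -> F x c = c.
    move=> c cj; case: (eqVneq (F x c) c) => // hne.
    have := jmin c; rewrite hne andbT; have -> : (c <= n.-1)%N by lia.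
    move=> /(_ isT); lia.
  have j0 : j != 0 by apply/eqP => e; apply: jne; rewrite e f0.
  have j1 : j != 1 by apply/eqP => e; apply: jne; rewrite e x1.
  have fj1 := below j.-1 ltac:(lia).
  have fjj : (j.+1 <= F x j)%N by case: (fs j.-1 j ltac:(lia) jT); lia.
  have jT' : (j.+1 <= n.-1)%N by have := fle j; lia.
  pose G := fun c => if c == j.-1 then j else F x c.
  have Gle : forall c, (G c <= n.-1)%N by move=> c; rewrite /G; case: eqP => _; [lia | exact: fle].
  apply: (stepG j.-1 (@mk n G)).
  + lia.
  + lia.
  + apply: mk_hom => //.
    * rewrite /G; case: eqP => ?; lia.
    * rewrite /G; case: eqP => ?; lia.
    * move=> a b ab bT; rewrite /G; case: eqP => ea; case: eqP => eb.
      -- lia.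
      -- have := mono j b ltac:(lia) bT; lia.
      -- have := below a ltac:(lia); lia.
      -- exact: fs.
  + move=> c; rewrite mkE // /G.
    have cT : (nat_of_ord c <= n.-1)%N by rewrite -ltnS ltn_ord.
    case: ifP => /eqP ec.
    * apply/eqP; lia.
    * apply/eqP => e.
      case: (ltngtP c j.-1) => cj.
      -- have := below c ltac:(lia); lia.
      -- case: (fs j.-1 c cj cT); lia.
      -- lia.
  + rewrite /mu (bigD1 (inord j.-1 : C n)) //= [X in (_ < X)%N](bigD1 (inord j.-1 : C n)) //=.
    rewrite !inordK; try lia.
    rewrite FmkE; try lia; last exact: Gle.
    have -> : \sum_(i < n.-1.+1 | i != inord j.-1) v n (F (@mk n G) i) =
              \sum_(i < n.-1.+1 | i != inord j.-1) v n (F x i).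
      apply: eq_bigr => c hc.
      have cT : (nat_of_ord c <= n.-1)%N by rewrite -ltnS ltn_ord.
      rewrite FmkE // /G; case: eqP => // e.
      by move: hc; rewrite -e inord_val eqxx.
    have vj : v n j = n - j by rewrite /v; case: eqP => ?; lia.
    have vj1 : v n j.-1 = n - j.-1 by rewrite /v; case: eqP => ?; lia.
    rewrite /G eqxx fj1 vj vj1; rewrite ltn_add2r; lia.
  + apply: ffun_eqF => c cT; rewrite /F ffunE val_g mkE // inordK; last lia.
    rewrite /G; have [ec|ec] := eqVneq c j.-1.
    * rewrite ec;  have -> : (j == j.-1.+1) by apply/eqP; lia.
      exact: fj1.
    *  case: eqP => e; last done.
      exfalso. case: (ltngtP c j.-1) => cj; last lia.
      -- have := below c ltac:(lia). change (F x c = j.-1.+1) in e. lia.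
      -- have := mono j c ltac:(lia) cT. change (F x c = j.-1.+1) in e. lia.
have f1 : (2 <= F x 1)%N by case: (fs 0 1 isT ltac:(lia)); lia.
have grow : forall c, (1 <= c)%N -> (c <= n.-1)%N -> (c.+1 <= F x c)%N \/ F x c = n.-1.
  elim=> [//|c IHc] _ cT.
  case: (posnP c) => [->|cpos]; first by left.
  case: (IHc cpos ltac:(lia)) => h; case: (fs c c.+1 ltac:(lia) cT); lia.
have fTm1 : F x n.-1.-1 = n.-1 by have := fle n.-1.-1; case: (grow n.-1.-1 ltac:(lia) ltac:(lia)); lia.
have ex : exists c, F x c == n.-1 by exists n.-1; rewrite fT.
case: (ex_minnP ex) => k /eqP fk kmin.
have kT : (k <= n.-1.-1)%N by apply: kmin; rewrite fTm1.
have k0 : (0 < k)%N by case: (posnP k) => // e; move: fk; rewrite e f0; lia.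
have bk : forall c, (c < k)%N -> (F x c < n.-1)%N.
  move=> c ck; have := fle c; case: (eqVneq (F x c) n.-1) => [e|ne]; last lia.
  have := kmin c; rewrite e eqxx => /(_ isT); lia.
have ak : forall c, (k <= c)%N -> (c <= n.-1)%N -> F x c = n.-1.
  move=> c kc cT; have := mono k c kc cT; have := fle c; lia.
have f2 : forall c, (1 <= c)%N -> (c <= n.-1)%N -> (2 <= F x c)%N.
  move=> c c1 cT; have := mono 1 c c1 cT; lia.
pose G := fun c => if (c < k)%N then (F x c).-1 else if c == k then n.-1.-1 else n.-1.
have Gle : forall c, (G c <= n.-1)%N.
  move=> c; rewrite /G; case: ltnP => _; last case: eqP => _; have := fle c; lia.
apply: (stepH (@mk n G)).
- apply: mk_hom => //.
  + by rewrite /G k0 f0.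
  + rewrite /G; case: ltnP => h; first lia. case: eqP => h'; lia.
  + move=> a b ab bT.
    have := fs a b ab bT; have := f2 b ltac:(lia) bT.
    rewrite /G; case: (ltnP a k) => hak; case: (ltnP b k) => hbk.
    * have := bk a hak; have := bk b hbk; case: (posnP a) => ha.
      -- rewrite ha f0; lia.
      -- have := f2 a ha ltac:(lia); lia.
    * have := bk a hak; case: eqP => hb; lia.
    * lia.
    * case: eqP => ha; case: eqP => hb; lia.
- rewrite /mu (bigD1 (inord k : C n)) //= [X in (_ < X)%N](bigD1 (inord k : C n)) //=.
  rewrite !inordK; try lia.
  rewrite FmkE; try lia; last exact: Gle.
  have rest : (\sum_(i < n.-1.+1 | i != inord k) v n (F (@mk n G) i) <=
              \sum_(i < n.-1.+1 | i != inord k) v n (F x i) + n)%N.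
    apply: (@leq_trans (\sum_(i < n.-1.+1 | i != inord k) (v n (F x i) + 1))).
      apply: leq_sum => c hc.
      have cT : (nat_of_ord c <= n.-1)%N by rewrite -ltnS ltn_ord.
      have ck : nat_of_ord c != k by apply: contraNneq hc => <-; rewrite inord_val.
      rewrite FmkE // /G /v.
      case: (ltnP c k) => h.
      + have := bk c h; case: eqP => e1; case: eqP => e2; lia.
      + rewrite (negbTE ck). have := ak c h cT. case: eqP => e1; case: eqP => e2; lia.
    rewrite big_split /= leq_add2l sum1_card.
    apply: leq_trans (max_card _) _. rewrite card_ord. lia.
  have vk : v n (G k) = 2 by rewrite /G ltnn eqxx /v; case: eqP => ?; lia.
  have vk2 : v n (F x k) = 4 * n by rewrite fk /v eqxx.
  rewrite vk vk2. apply: (leq_ltn_trans (leq_add (leqnn 2) rest)). rewrite addnCA [X in (_ < X)%N]addnC ltn_add2l. lia.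
- apply: ffun_eqF => c cT; rewrite /F ffunE val_h1 mkE // inordK; last lia.
  rewrite /G; case: (ltnP c k) => h.
  + case: (posnP c) => hc.
    * rewrite hc. change (F x 0 = (if (0 < (F x 0).-1)%N && ((F x 0).-1 < n.-1)%N then (F x 0).-1.+1 else (F x 0).-1)).
      by rewrite f0.
    * have := f2 c hc cT; have := bk c h. change (F x c) with (nat_of_ord (x (inord c))).
      case: ifP => /andP; [move=> _; lia | move=> hh2 h3 h4; exfalso; apply: hh2; split; apply/idP; lia].
  + case: eqP => e.
    * change (F x c = (if (0 < n.-1.-1)%N && (n.-1.-1 < n.-1)%N then n.-1.-1.+1 else n.-1.-1)).
      have -> : (0 < n.-1.-1)%N && (n.-1.-1 < n.-1)%N by apply/andP; split; apply/idP; lia.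
      rewrite e fk; lia.
    * change (F x c = (if (0 < n.-1)%N && (n.-1 < n.-1)%N then n.-1.+1 else n.-1)).
      rewrite ltnn andbF. exact: ak.
Qed.

Lemma id_hom n : is_hom ([ffun c : C n => c]).
Proof. apply: GH_hom; split; rewrite ?ffunE //. move=> a b ab; rewrite !ffunE; by left. Qed.

Theorem proposition3p2 (n : nat) (hn : (4 <= n)%N) :
  (* e_{C_n} is injective *)
  (forall a b : C n, (forall x, is_hom x -> x a = x b) -> a = b) /\
  (* e_{C_n} is surjective onto E(D(C_n)) *)
  (forall phi : {ffun C n -> C n} -> C n, dual_morphism phi ->
     exists a : C n, forall x, is_hom x -> phi x = x a).
Proof.
split.
- move=> a b h; have := h _ (id_hom n); by rewrite !ffunE.
- move=> phi hphi; exists (phi [ffun c => c]) => x hx.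
  exact: (@main n hn phi hphi (mu x).+1 x hx (ltnSn _)).
Qed.
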